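(* Let $\mathbb{K}$ be a field and $f=a_0(x)+a_1(x)y+\cdots+a_n(x)y^n\in\mathbb{K}[x,y]$ with $n\geq 2$, $a_0,\ldots,a_n\in\mathbb{K}[x]$, $a_0a_n\neq 0$. Assume that $f$ has no nonconstant factor in $\mathbb{K}[x]$. If there exists an index $j$ with $0\leq j\leq n-1$ such that $$\deg a_j>\max_{i\neq j}\{\deg a_i+(j-i)\deg a_n\},$$ then $f$ is a product of at most $n-j$ irreducible polynomials over $\mathbb{K}[x]$. In particular, if $j=n-1$, then $f$ is irreducible over $\mathbb{K}[x]$.
   Context: $f$ is regarded as a polynomial in $y$ with coefficients in $\mathbb{K}[x]$; ''a product of at most $k$ irreducible polynomials over $\mathbb{K}[x]$'' means that in the factorization of $f$ into irreducible elements of $\mathbb{K}[x][y]$ the number of factors, counted with multiplicities, is at most $k$. *)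

(* Defs.v *)
From HB Require Import structures.
From mathcomp Require Import all_boot all_order all_algebra.
Set Implicit Arguments. Unset Strict Implicit. Unset Printing Implicit Defensive.
Import Order.TTheory GRing.Theory Num.Theory.
Local Open Scope ring_scope.

(* Divisibility in the ring R (genuine ring divisibility, not MathComp's
   pseudo-division %| on polynomials). *)
Definition ring_dvd (R : comRingType) (d p : R) : Prop := exists g : R, p = d * g.

Definition irreducible_elt (R : idomainType) (p : R) : Prop :=
  p != 0 /\ p \isn't a GRing.unit /\
  forall q r : R, p = q * r -> q \is a GRing.unit \/ r \is a GRing.unit.

Definition degz (K : fieldType) (p : {poly K}) : int := ((size p).-1)%:Z.

(* Main.v *)
Require Import Defs.
From HB Require Import structures.
From mathcomp Require Import all_boot all_order all_algebra.
From mathcomp Require Import zify ring.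
From Stdlib Require Import Classical.
Set Implicit Arguments. Unset Strict Implicit. Unset Printing Implicit Defensive.
Import Order.TTheory GRing.Theory Num.Theory.
Local Open Scope ring_scope.

Definition Bz (K : fieldType) (p : {poly K}) (e : int) : Prop := p != 0 -> degz p <= e.
Definition Sz (K : fieldType) (p : {poly K}) (e : int) : Prop := p != 0 -> degz p < e.

Lemma Bz0 (K : fieldType) e : Bz (0 : {poly K}) e.
Proof. by rewrite /Bz eqxx. Qed.
Lemma Sz0 (K : fieldType) e : Sz (0 : {poly K}) e.
Proof. by rewrite /Sz eqxx. Qed.

Lemma degzE (K : fieldType) (p : {poly K}) : p != 0 -> (size p)%:Z = degz p + 1.
Proof.
move=> p0; rewrite /degz; have : (0 < size p)%N by rewrite size_poly_gt0.
by case: (size p) => // m _ /=; rewrite intS addrC.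
Qed.

Lemma BzD (K : fieldType) (p q : {poly K}) e : Bz p e -> Bz q e -> Bz (p + q) e.
Proof.
rewrite /Bz => hp hq pq0.
have [p0|p0] := eqVneq p 0; first by move: pq0; rewrite p0 add0r; apply: hq.
have [q0|q0] := eqVneq q 0; first by move: pq0; rewrite q0 addr0; apply: hp.
have hs := size_polyD p q.
have hpq := degzE pq0.
have : (size (p + q))%:Z <= e + 1.
  apply: le_trans (_ : (maxn (size p) (size q))%:Z <= _); first by rewrite lez_nat.
  case: (leqP (size p) (size q)) => h.
  - by rewrite degzE // lerD2r hq.
  - by rewrite degzE // lerD2r hp.
by rewrite hpq lerD2r.
Qed.

Lemma SzB (K : fieldType) (p : {poly K}) e : Sz p e <-> Bz p (e - 1).
Proof. by rewrite /Sz /Bz; split => h /h; lia. Qed.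

Lemma SzD (K : fieldType) (p q : {poly K}) e : Sz p e -> Sz q e -> Sz (p + q) e.
Proof. move=> /SzB hp /SzB hq; apply/SzB; exact: BzD. Qed.

Lemma degzM (K : fieldType) (p q : {poly K}) : p != 0 -> q != 0 ->
  degz (p * q) = degz p + degz q.
Proof.
move=> p0 q0.
have pq0 : p * q != 0 by rewrite mulf_neq0.
have hp : (0 < size p)%N by rewrite size_poly_gt0.
have hq : (0 < size q)%N by rewrite size_poly_gt0.
rewrite /degz size_mul //.
move: hp hq; case: (size p) => // a; case: (size q) => // b _ _.
rewrite addSn /= addnS /= -PoszD //.
Qed.

Lemma BzM (K : fieldType) (p q : {poly K}) a b : Bz p a -> Bz q b -> Bz (p * q) (a + b).
Proof.
rewrite /Bz => hp hq pq0.
have p0 : p != 0 by apply: contraNneq pq0 => ->; rewrite mul0r.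
have q0 : q != 0 by apply: contraNneq pq0 => ->; rewrite mulr0.
by rewrite degzM // lerD // ?hp ?hq.
Qed.

Lemma SzMl (K : fieldType) (p q : {poly K}) a b : Sz p a -> Bz q b -> Sz (p * q) (a + b).
Proof.
rewrite /Sz /Bz => hp hq pq0.
have p0 : p != 0 by apply: contraNneq pq0 => ->; rewrite mul0r.
have q0 : q != 0 by apply: contraNneq pq0 => ->; rewrite mulr0.
by rewrite degzM // ltr_leD // ?hp ?hq.
Qed.

Lemma SzMr (K : fieldType) (p q : {poly K}) a b : Bz p a -> Sz q b -> Sz (p * q) (a + b).
Proof. by move=> hp hq; rewrite mulrC addrC; apply: SzMl. Qed.

Lemma exactD (K : fieldType) (p q : {poly K}) e : p != 0 -> degz p = e -> Sz q e ->
  p + q != 0 /\ degz (p + q) = e.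
Proof.
move=> p0 hp hq.
have [->|q0] := eqVneq q 0; first by rewrite addr0.
have hs : (size q < size p)%N.
  have := hq q0; have := degzE p0; have := degzE q0; lia.
rewrite /degz size_polyDl //; split; last by [].
by rewrite -size_poly_eq0 size_polyDl // size_poly_eq0.
Qed.

Lemma Bz_sum (K : fieldType) (m : nat) (F : 'I_m -> {poly K}) e :
  (forall i, Bz (F i) e) -> Bz (\sum_(i < m) F i) e.
Proof. move=> h; apply: (big_ind (fun p => Bz p e)) => //; [exact: Bz0 | move=> x y; exact: BzD]. Qed.

Lemma Sz_sum (K : fieldType) (I : finType) (P : pred I) (F : I -> {poly K}) e :
  (forall i, P i -> Sz (F i) e) -> Sz (\sum_(i | P i) F i) e.
Proof. move=> h; apply: (big_ind (fun p => Sz p e)) => //; [exact: Sz0 | move=> x y; exact: SzD]. Qed.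

Lemma arithW (W1 W2 d : int) (i m : nat) : (i <= m)%N ->
  W1 + i%:Z * d + (W2 + (m - i)%N%:Z * d) = W1 + W2 + m%:Z * d.
Proof. move=> h; rewrite -{2}(subnK h) PoszD; ring. Qed.

Definition dom (K : fieldType) (d : int) (G : {poly {poly K}}) (k : nat) (W : int) : Prop :=
  [/\ G`_k != 0, degz G`_k = W + k%:Z * d,
      (forall i, Bz G`_i (W + i%:Z * d)) &
      (forall i, (i < k)%N -> Sz G`_i (W + i%:Z * d))].

Lemma dom_mul (K : fieldType) d (G H : {poly {poly K}}) k1 k2 W1 W2 :
  dom d G k1 W1 -> dom d H k2 W2 -> dom d (G * H) (k1 + k2) (W1 + W2).
Proof.
move=> [g0 gd gB gS] [h0 hd hB hS].
have Bterm m (i : 'I_m.+1) : Bz (G`_i * H`_(m - i)) (W1 + W2 + m%:Z * d).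
  rewrite -(arithW W1 W2 d (ltnSE (ltn_ord i))); exact: BzM.
have Sterm m (i : 'I_m.+1) : (m < k1 + k2)%N || (i != k1 :> nat) && (m == k1 + k2)%N ->
    Sz (G`_i * H`_(m - i)) (W1 + W2 + m%:Z * d).
  move=> hm; rewrite -(arithW W1 W2 d (ltnSE (ltn_ord i))).
  have him := ltnSE (ltn_ord i).
  case: (ltnP i k1) => hik.
    by apply: SzMl; [apply: gS | apply: hB].
  apply: SzMr; first by apply: gB.
  apply: hS; move: hm hik him; lia.
have hm : (k1 < (k1 + k2).+1)%N by lia.
have hex : G`_k1 * H`_k2 != 0 /\ degz (G`_k1 * H`_k2) = W1 + W2 + (k1 + k2)%N%:Z * d.
  split; first by rewrite mulf_neq0.
  rewrite degzM // gd hd PoszD; ring.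
have [hne hdeg] : (G * H)`_(k1 + k2) != 0 /\ degz (G * H)`_(k1 + k2) = W1 + W2 + (k1 + k2)%N%:Z * d.
  rewrite coefM (bigD1 (Ordinal hm)) //=.
  have -> : (k1 + k2 - k1 = k2)%N by lia.
  apply: exactD; [exact: hex.1 | exact: hex.2 |].
  apply: Sz_sum => i hi; apply: Sterm; apply/orP; right; rewrite eqxx andbT.
  by move: hi; apply: contraNneq => e; apply/eqP/val_inj.
split => //.
- move=> m; rewrite coefM; apply: Bz_sum => i; exact: Bterm.
- move=> m hlt; rewrite coefM; apply: Sz_sum => i _; apply: Sterm; by rewrite hlt.
Qed.

Lemma dom_exists (K : fieldType) d (G : {poly {poly K}}) : G != 0 -> exists k W, dom d G k W.
Proof.
move=> G0.
have hN : (0 < size G)%N by rewrite size_poly_gt0.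
have hi0 : ((size G).-1 < size G)%N by rewrite prednK.
pose F := fun i : 'I_(size G) => degz G`_i - i%:Z * d.
pose P := fun i : 'I_(size G) => G`_i != 0.
have P0 : P (Ordinal hi0) by rewrite /P /= -lead_coefE lead_coef_eq0.
case: (arg_maxP F P0) => im Pim Fmax.
set W := F im.
have exP : exists k, (G`_k != 0) && (degz G`_k == W + k%:Z * d).
  exists im; rewrite (Pim : G`_im != 0) /= /W /F; apply/eqP; ring.
case: (ex_minnP exP) => k /andP[k0 /eqP kd] kmin.
exists k, W; split => //.
- move=> i; rewrite /Bz => i0.
  have hi : (i < size G)%N by rewrite ltnNge; apply: contra i0 => h; rewrite nth_default.
  move: (Fmax (Ordinal hi) i0) => h; rewrite -lerBlDr; exact h.
- move=> i ik; rewrite /Sz => i0.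
  have hi : (i < size G)%N by rewrite ltnNge; apply: contra i0 => h; rewrite nth_default.
  have := Fmax (Ordinal hi) i0; rewrite /F /= le_eqVlt => /orP[/eqP e|]; last by move=> h; rewrite -ltrBlDr; exact h.
  have : (G`_i != 0) && (degz G`_i == W + i%:Z * d).
    by rewrite i0 /=; apply/eqP; rewrite /W /F /= -e; ring.
  by move/kmin; rewrite leqNgt ik.
Qed.

Lemma dom_one (K : fieldType) d : dom d (1 : {poly {poly K}}) 0 0.
Proof.
split.
- by rewrite coef1 oner_neq0.
- by rewrite coef1 /= /degz size_poly1 mul0r addr0.
- move=> [|i]; rewrite coef1 /=; last by rewrite mulr0n; exact: Bz0.
  by rewrite /Bz /degz size_poly1 mul0r addr0.
- by [].
Qed.

Lemma dom_unique (K : fieldType) d (G : {poly {poly K}}) k W k' W' :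
  dom d G k W -> dom d G k' W' -> k = k'.
Proof.
move=> [g0 gd gB gS] [g0' gd' gB' gS'].
have [h|h|//] := ltngtP k k'.
- have := gS' k h g0; have := gB k' g0'; rewrite gd gd'.
  move=> h1 h2; have : W < W' by rewrite -(ltrD2r (k%:Z * d)).
  have : W' <= W by rewrite -(lerD2r (k'%:Z * d)).
  by move=> a b; have := le_lt_trans a b; rewrite ltxx.
- have := gS k' h g0'; have := gB' k g0; rewrite gd gd'.
  move=> h1 h2; have : W' < W by rewrite -(ltrD2r (k'%:Z * d)).
  have : W <= W' by rewrite -(lerD2r (k%:Z * d)).
  by move=> a b; have := le_lt_trans a b; rewrite ltxx.
Qed.

Lemma dom_prod (K : fieldType) d (s : seq {poly {poly K}}) :
  (forall q, q \in s -> q != 0 /\ exists k W, dom d q k W /\ (k < (size q).-1)%N) ->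
  exists k W, dom d (\prod_(q <- s) q) k W /\
     (size s + k <= (size (\prod_(q <- s) q)%R).-1)%N.
Proof.
elim: s => [|q s IH] hs.
  by exists 0%N, 0; rewrite big_nil; split; [exact: dom_one | rewrite size_poly1].
have [q0 [k0 [W0 [hq0 hk0]]]] := hs q (mem_head q s).
have [k [W [hP hk]]] : exists k W, dom d (\prod_(q <- s) q) k W /\
     (size s + k <= (size (\prod_(q <- s) q)%R).-1)%N.
  by apply: IH => x xs; apply: hs; rewrite in_cons xs orbT.
exists (k0 + k)%N, (W0 + W); rewrite big_cons; split; first exact: dom_mul.
have P0 : \prod_(q <- s) q != 0.
  by case: hP => h _ _ _; apply: contraNneq h => ->; rewrite coef0.
rewrite size_mul //.
have : (0 < size (\prod_(q <- s) q)%R)%N by rewrite size_poly_gt0.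
move: hk hk0 => /=; rewrite -!subn1. move: (size (\prod_(q <- s) q)%R) => b. move: (size q) (size s) => x y; lia.
Qed.

Definition primitive (K : fieldType) (g : {poly {poly K}}) : Prop :=
  forall c : {poly K}, ring_dvd c%:P g -> (size c <= 1)%N.

Lemma prim_factor (K : fieldType) (g a b : {poly {poly K}}) :
  primitive g -> g = a * b -> primitive a.
Proof.
move=> pg e c [h eh]; apply: pg; exists (h * b); by rewrite e eh mulrA.
Qed.

Lemma nonconst_factor (K : fieldType) (g a b : {poly {poly K}}) :
  g != 0 -> primitive g -> g = a * b -> a \isn't a GRing.unit -> (1 < size a)%N.
Proof.
move=> g0 pg e au; rewrite ltnNge; apply/negP => ha.
have a0 : a != 0 by apply: contraNneq g0 => a0; rewrite e a0 mul0r.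
have ea := size1_polyC ha.
have hc : (size (a`_0)%R <= 1)%N by apply: (prim_factor pg e); exists 1; rewrite mulr1 -ea.
have sa : size a = 1%N.
  by apply/eqP; rewrite eqn_leq ha /= size_poly_gt0.
have a00 : a`_0 != 0.
  by rewrite -polyC_eq0 -ea.
have sa0 : size a`_0 = 1%N.
  by apply/eqP; rewrite eqn_leq hc /= size_poly_gt0.
apply: (negP au); rewrite poly_unitE sa eqxx /= poly_unitE sa0 eqxx /= unitfE.
by move: a00; rewrite -lead_coef_eq0 lead_coefE sa0.
Qed.

Lemma factor_exists (K : fieldType) (g : {poly {poly K}}) :
  g != 0 -> primitive g -> (1 < size g)%N ->
  exists s : seq {poly {poly K}}, (forall q, q \in s -> irreducible_elt q) /\ g = \prod_(q <- s) q.
Proof.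
move: {2}(size g).+1 (ltnSn (size g)) => N.
elim: N g => [|N IH] g // hN g0 pg hs.
have gnu : g \isn't a GRing.unit by rewrite poly_unitE negb_and; apply/orP; left; rewrite neq_ltn hs orbT.
case: (classic (irreducible_elt g)) => [irr|nirr].
  by exists [:: g]; split; [move=> q; rewrite inE => /eqP -> | rewrite big_seq1].
have [q [r [e [qu ru]]]] : exists q r, g = q * r /\ q \isn't a GRing.unit /\ r \isn't a GRing.unit.
  apply: NNPP => H; apply: nirr; split => //; split => // q r e.
  case: (boolP (q \is a GRing.unit)) => qu; [by left | right].
  apply/negPn/negP => ru; apply: H; exists q, r; split => //.
have q0 : q != 0 by apply: contraNneq g0 => q0; rewrite e q0 mul0r.
have r0 : r != 0 by apply: contraNneq g0 => r0; rewrite e r0 mulr0.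
have hq := nonconst_factor g0 pg e qu.
have hr : (1 < size r)%N by apply: (nonconst_factor g0 pg (_ : g = r * q) ru); rewrite mulrC.
have sg : size g = (size q + size r).-1 by rewrite e size_mul.
have pq := prim_factor pg e.
have pr : primitive r by apply: (prim_factor pg (_ : g = r * q)); rewrite mulrC.
have [sq [iq eq]] : exists s : seq {poly {poly K}}, (forall x, x \in s -> irreducible_elt x) /\ q = \prod_(x <- s) x.
  by apply: IH => //; move: hN; rewrite sg; lia.
have [sr [ir er]] : exists s : seq {poly {poly K}}, (forall x, x \in s -> irreducible_elt x) /\ r = \prod_(x <- s) x.
  by apply: IH => //; move: hN; rewrite sg; lia.
exists (sq ++ sr); split; last by rewrite big_cat /= e eq er.
by move=> x; rewrite mem_cat => /orP[/iq|/ir].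
Qed.

Theorem theorem7 (K : fieldType) (f : {poly {poly K}}) (n j : nat) :
  (2 <= n)%N ->
  size f = n.+1 ->
  f`_0 * f`_n != 0 ->
  (forall d : {poly K}, ring_dvd d%:P f -> (size d <= 1)%N) ->
  (j <= n.-1)%N ->
  f`_j != 0 ->
  (forall i : nat, (i <= n)%N -> i != j -> f`_i != 0 ->
     degz (f`_i) + (j%:Z - i%:Z) * degz (f`_n) < degz (f`_j)) ->
  exists s : seq {poly {poly K}},
    [/\ (size s <= n - j)%N,
        (forall q, q \in s -> irreducible_elt q) &
        f = \prod_(q <- s) q].
Proof.
move=> hn hsize h0n prim hj hj0 hdom.
have f00 : f`_0 != 0 by move: h0n; rewrite mulf_eq0 negb_or => /andP[].
have fn0 : f`_n != 0 by move: h0n; rewrite mulf_eq0 negb_or => /andP[].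
have f0 : f != 0 by rewrite -size_poly_eq0 hsize.
set d := degz f`_n.
have d0 : 0 <= d by rewrite /d /degz.
have hlt i : i != j -> Sz f`_i (degz f`_j - j%:Z * d + i%:Z * d).
  move=> ij fi0.
  have hi : (i <= n)%N.
    by rewrite -ltnS -hsize ltnNge; apply: contra fi0 => h; rewrite nth_default.
  have := hdom i hi ij fi0.
  have -> : degz f`_j - j%:Z * d + i%:Z * d = degz f`_j - (j%:Z - i%:Z) * d by ring.
  by rewrite ltrBrDr.
have domf : dom d f j (degz f`_j - j%:Z * d).
  split => //.
  - by rewrite -addrA addNr addr0.
  - move=> i; have [->|ij] := eqVneq i j.
      by move=> _; rewrite -addrA addNr addr0.
    by move=> h; apply: ltW; apply: hlt.
  - by move=> i ij; apply: hlt; rewrite ltn_eqF.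
have hsf : (1 < size f)%N by rewrite hsize; lia.
have [s [irr ef]] := factor_exists f0 prim hsf.
exists s; split => //.
have hs : forall q, q \in s -> q != 0 /\ exists k W, dom d q k W /\ (k < (size q).-1)%N.
  move=> q qs.
  have [q0 [qnu _]] := irr q qs.
  split => //.
  have er : f = q * \prod_(x <- rem q s) x by rewrite ef (big_rem q qs).
  set r := \prod_(x <- rem q s) x in er.
  have r0 : r != 0 by apply: contraNneq f0 => r0; rewrite er r0 mulr0.
  have sq := nonconst_factor f0 prim er qnu.
  have [k [W hd]] := dom_exists d q0.
  exists k, W; split => //.
  case: hd => qk0 qkd qB qS.
  have hk : (k < size q)%N.
    by rewrite ltnNge; apply: contra qk0 => h; rewrite nth_default.
  rewrite ltn_neqAle -ltnS prednK ?hk ?andbT; last by lia.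
  apply/eqP => ek.
  have q00 : q`_0 != 0 by move: f00; rewrite er coef0M mulf_eq0 negb_or => /andP[].
  have h1 := qS 0%N (_ : (0 < k)%N) q00.
  have : degz q`_0 < W by move: (h1 (ltac:(lia))); rewrite mul0r addr0.
  move=> {h1} h1.
  have lq : lead_coef q = q`_k by rewrite lead_coefE ek.
  have lf : lead_coef f = f`_n by rewrite lead_coefE hsize.
  have : degz (lead_coef q) <= d.
    rewrite /d -lf er lead_coefM degzM ?lead_coef_eq0 //.
    by rewrite lerDl /degz.
  rewrite lq qkd => h2.
  have hm : (0 < k)%N by lia.
  have h3 : d <= k%:Z * d.
    by rewrite -(prednK hm) intS mulrDl mul1r lerDl mulr_ge0.
  have h4 : 0 <= degz q`_0 by rewrite /degz.
  move: h1 h2 h3 h4 d0; lia.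
have [k [W [hdk hsk]]] := dom_prod hs.
rewrite -ef in hdk hsk.
have ekj := dom_unique hdk domf.
move: hsk; rewrite ekj hsize /=; lia.
Qed.
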